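(* Let $v=(v_l,v_h)$ be a valuation profile and let $\alpha\in(0,1)$. Then for each $t\in\{0,1,\dots,ES(v)\}$ there is a strict Nash equilibrium of the $\alpha$-auction game with valuations $v$ whose payoff vector is $(\pi_l,\pi_h)=(c_l+t,\ c_h+(ES(v)-t))$. That is, the set of strict Nash equilibrium payoffs of each interior-price auction contains the set $\{(c_l+t,\,c_h+(ES(v)-t)) : t=0,\dots,ES(v)\}$, which is the set of Nash equilibrium payoffs of the extreme-price auctions ($\alpha\in\{0,1\}$).
   Context: Two agents $l,h$ jointly own an indivisible good. Agent $i\in\{l,h\}$ has valuation $v_i$; valuations are even nonnegative integers bounded by a maximum valuation $\overline{v}$, with $v_l<v_h$. Agent $i$'s utility from receiving the object and paying $p$ to the other agent is $v_i-p$; from not receiving the object and receiving transfer $p$ it is $p$; agents are expected-utility maximizers. Net valuations are $c_i\equiv v_i/2$, and the equity surplus is $ES(v)\equiv c_h-c_l$. The bid set is $\mathcal{B}=\{0,1,\dots,\overline{p}\}$ with $\overline{p}$ an integer, $\overline{p}\geq\overline{v}/2$. For $\alpha\in[0,1]$, the $\alpha$-auction (with tie-breaker favoring $h$) is: each agent simultaneously chooses a bid in $\mathcal{B}$; the agent with the strictly higher bid receives the object, and in case of a tie agent $h$ receives the object; the agent receiving the object pays $\alpha\cdot(\text{winner's bid})+(1-\alpha)\cdot(\text{loser's bid})$ to the other agent. Auctions with $\alpha\in\{0,1\}$ are extreme-price auctions; those with $\alpha\in(0,1)$ are interior-price auctions. A strict Nash equilibrium is a strategy profile in which each agent's strategy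 is her unique best response to the other agent's strategy (necessarily a pure-strategy profile). *)

(* Defs.v *)
From HB Require Import structures.
From mathcomp Require Import all_boot all_order all_algebra.
Set Implicit Arguments. Unset Strict Implicit. Unset Printing Implicit Defensive.
Import Order.TTheory GRing.Theory Num.Theory.
Local Open Scope ring_scope.

Section Auction.
Variable R : realFieldType.

Definition price (alpha : R) (bw bl : nat) : R :=
  alpha * bw%:R + (1 - alpha) * bl%:R.

(* utility of agent l (valuation vl) at bid profile (bl, bh);
   l wins only with a strictly higher bid (ties favour h) *)
Definition util_l (alpha : R) (vl : nat) (bl bh : nat) : R :=
  if (bh < bl)%N then vl%:R - price alpha bl bh else price alpha bh bl.

Definition util_h (alpha : R) (vh : nat) (bl bh : nat) : R :=
  if (bl <= bh)%N then vh%:R - price alpha bh bl else price alpha bl bh.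

Definition strict_NE (alpha : R) (pbar vl vh bl bh : nat) : Prop :=
  [/\ (bl <= pbar)%N, (bh <= pbar)%N,
      (forall b, (b <= pbar)%N -> b <> bl -> util_l alpha vl b bh < util_l alpha vl bl bh)
    & (forall b, (b <= pbar)%N -> b <> bh -> util_h alpha vh bl b < util_h alpha vh bl bh)].

Definition netval (v : nat) : R := v%:R / 2%:R.

(* equity surplus ES(v) = c_h - c_l, as a natural number (v even) *)
Definition ES (vl vh : nat) : nat := (vh./2 - vl./2)%N.

End Auction.

(* Main.v *)
Require Import Defs.
From HB Require Import structures.
From mathcomp Require Import all_boot all_order all_algebra.
From mathcomp Require Import zify ring lra.
Import Order.TTheory GRing.Theory Num.Theory.
Local Open Scope ring_scope.

Lemma L1 (R : realFieldType) (alpha : R) (b p : nat) :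
  0 < alpha -> alpha < 1 -> (p < b)%N -> p%:R < price alpha b p.
Proof.
move=> a0 a1 hb; rewrite /price.
have : (p%:R : R) < b%:R by rewrite ltr_nat.
move=> h; nra.
Qed.

Lemma L2 (R : realFieldType) (alpha : R) (b p : nat) :
  0 < alpha -> alpha < 1 -> (b < p)%N -> price alpha p b < p%:R.
Proof.
move=> a0 a1 hb; rewrite /price.
have : (b%:R : R) < p%:R by rewrite ltr_nat.
move=> h; nra.
Qed.

Theorem proposition2 (R : realFieldType) (vbar pbar vl vh : nat) (alpha : R) :
  ~~ odd vl -> ~~ odd vh -> (vl < vh)%N -> (vh <= vbar)%N ->
  (vbar <= pbar.*2)%N ->
  0 < alpha -> alpha < 1 ->
  forall t : nat, (t <= ES vl vh)%N ->
  exists bl bh : nat,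
    strict_NE alpha pbar vl vh bl bh /\
    util_l alpha vl bl bh = netval R vl + t%:R /\
    util_h alpha vh bl bh = netval R vh + (ES vl vh - t)%N%:R.
Proof.
move=> evl evh lt12 hvb hpb a0 a1 t ht.
have evl' : vl = (vl./2 + vl./2)%N by rewrite addnn even_halfK.
have evh' : vh = (vh./2 + vh./2)%N by rewrite addnn even_halfK.
move: ht; rewrite /ES => ht.
set p := (vl./2 + t)%N.
have pch : (p <= vh./2)%N by rewrite /p; lia.
have ppb : (p <= pbar)%N by lia.
have pp : price alpha p p = p%:R by rewrite /price; ring.
exists p, p; split; [|split].
- split => // b hb nb.
  + rewrite /util_l ltnn pp.
    case: (ltngtP p b) => hpb'; last by exfalso; apply: nb; rewrite hpb'.
    * have := @L1 R alpha _ _ a0 a1 hpb'.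
      have : (vl%:R : R) <= p%:R + p%:R by rewrite -natrD ler_nat; lia.
      move=> ? ?; lra.
    * exact: L2.
  + rewrite /util_h leqnn pp.
    case: (ltngtP p b) => hpb'; last by exfalso; apply: nb; rewrite hpb'.
    * have := @L1 R alpha _ _ a0 a1 hpb'. move=> ?; lra.
    * have := @L2 R alpha _ _ a0 a1 hpb'.
      have : (p%:R + p%:R : R) <= vh%:R by rewrite -natrD ler_nat; lia.
      move=> ? ?; lra.
- rewrite /util_l ltnn pp /netval /p natrD.
  have -> : (vl%:R : R) = (vl./2)%:R + (vl./2)%:R by rewrite -natrD -evl'.
  by field.
- rewrite /util_h leqnn pp /netval.
  have e : (vh = p + (vh./2 + (vh./2 - vl./2 - t)))%N by rewrite /p; lia.
  rewrite {1}e !natrD.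
  have -> : (vh%:R : R) = (vh./2)%:R + (vh./2)%:R by rewrite -natrD -evh'.
  by field.
Qed.
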